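(* Let $\mathbb{G}$ be the class of DAGs on $V$. For a distribution $P$ and a DAG $G$ on $V$, each of the following statements implies the next: (1) $P$ is minimally Markovian w.r.t. $G$; (2) $G$ is a sparsest Markov graph of $P$; (3) $P$ is Pearl-minimal to $G$; (4) $P$ is causally minimal to $G$.
   Context: $J(P)$ denotes the set of conditional independence triples $(A,B,C)$ (disjoint subsets of $V$, $A\perp\!\!\!\perp B\mid C$) of $P$, and $J(G)$ the set of d-separation triples of the DAG $G$. $P$ is Markovian to $G$ if $J(G)\subseteq J(P)$. The skeleton $\mathrm{sk}(G)$ is the undirected graph obtained by removing arrowheads; $\mathrm{sk}(P)$ is the undirected graph on $V$ in which $i,j$ are adjacent iff there is no $C\subseteq V\setminus\{i,j\}$ with $i\perp\!\!\!\perp j\mid C$. $P$ is adjacency faithful w.r.t. $G$ if $\mathrm{sk}(P)=\mathrm{sk}(G)$; $P$ is minimally Markovian w.r.t. $G$ if $P$ is Markovian to $G$ and adjacency faithful w.r.t. $G$. With $|E(G)|$ the number of edges, $G\in\mathbb{G}$ is a sparsest Markov graph of $P$ if $P$ is Markovian to $G$ and $|E(G)|\le|E(G')|$ for all $G'\in\mathbb{G}$ to which $P$ is Markovian. $P$ is Pearl-minimal to $G\in\mathbb{G}$ if there is no $G'\in\mathbb{G}$ with $J(G)\subsetneq J(G')\subseteq J(P)$. $P$ is causally minimal to $G\in\mathbb{G}$ if $P$ is Markovian to $G$ and not Markovian to any proper subgraph $G'\in\mathbb{G}$ of $G$.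
   Formalization: P being Pearl-minimal to G also includes P being Markovian to G, besides the absence of any G′ ∈ 𝔾 with J(G) ⊊ J(G′) ⊆ J(P). The statement above fails without it. *)

(* Defs.v *)
From mathcomp Require Import all_boot.

Set Implicit Arguments.
Unset Strict Implicit.
Unset Printing Implicit Defensive.

(* Vertex set V : finType.  A directed graph on V is its set of directed
   edges E : {set V * V}; (x, y) \in E means x -> y. *)

Definition edge_rel (V : finType) (E : {set V * V}) : rel V :=
  fun x y => (x, y) \in E.

(* DAG: no edge x -> y such that y reaches x by a directed path
   (this excludes self-loops and all directed cycles). *)
Definition is_dag (V : finType) (E : {set V * V}) : Prop :=
  forall x y : V, (x, y) \in E -> ~~ connect (edge_rel E) y x.

Definition adjG (V : finType) (E : {set V * V}) : rel V :=
  fun x y => ((x, y) \in E) || ((y, x) \in E).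

(* The walk s = [:: a; ...] is active given C: every internal vertex m with
   neighbours x, y on the walk is either a collider (x -> m <- y) having
   itself or a descendant in C, or a non-collider not in C. *)
Definition active_path (V : finType) (E : {set V * V}) (C : {set V})
    (a : V) (s : seq V) : Prop :=
  forall i : nat, 0 < i -> i.+1 < size s ->
    let x := nth a s i.-1 in
    let m := nth a s i in
    let y := nth a s i.+1 in
    if ((x, m) \in E) && ((y, m) \in E)
    then exists c, c \in C /\ connect (edge_rel E) m c
    else m \notin C.

Definition dconnected (V : finType) (E : {set V * V}) (C : {set V})
    (a b : V) : Prop :=
  exists p : seq V,
    [/\ path (adjG E) a p, last a p = b, uniq (a :: p) &
        active_path E C a (a :: p)].

Definition dsep (V : finType) (E : {set V * V}) (A B C : {set V}) : Prop :=
  forall a b, a \in A -> b \in B -> ~ dconnected E C a b.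

Definition disjoint3 (V : finType) (A B C : {set V}) : Prop :=
  [/\ [disjoint A & B], [disjoint A & C] & [disjoint B & C]].

Definition triples (V : finType) := {set V} -> {set V} -> {set V} -> Prop.

Definition ci_relation (V : finType) := triples V.

Definition JP (V : finType) (P : ci_relation V) : triples V :=
  fun A B C => disjoint3 A B C /\ P A B C.

Definition JG (V : finType) (E : {set V * V}) : triples V :=
  fun A B C => disjoint3 A B C /\ dsep E A B C.

Definition incl (V : finType) (J1 J2 : triples V) : Prop :=
  forall A B C, J1 A B C -> J2 A B C.

Definition strict_incl (V : finType) (J1 J2 : triples V) : Prop :=
  incl J1 J2 /\ exists A B C, J2 A B C /\ ~ J1 A B C.

Definition markovian (V : finType) (P : ci_relation V) (E : {set V * V}) :=
  incl (JG E) (JP P).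

Definition skP (V : finType) (P : ci_relation V) (i j : V) : Prop :=
  i != j /\ ~ exists C : {set V}, C \subset ~: [set i; j] /\
                                  JP P [set i] [set j] C.

Definition adjacency_faithful (V : finType) (P : ci_relation V)
    (E : {set V * V}) : Prop :=
  forall i j : V, adjG E i j <-> skP P i j.

Definition minimally_markovian (V : finType) (P : ci_relation V)
    (E : {set V * V}) : Prop :=
  markovian P E /\ adjacency_faithful P E.

Definition sparsest_markov (V : finType) (P : ci_relation V)
    (E : {set V * V}) : Prop :=
  is_dag E /\ markovian P E /\
  forall E' : {set V * V}, is_dag E' -> markovian P E' -> #|E| <= #|E'|.

Definition pearl_minimal (V : finType) (P : ci_relation V)
    (E : {set V * V}) : Prop :=
  markovian P E /\
  ~ exists E' : {set V * V},
      [/\ is_dag E', strict_incl (JG E) (JG E') & incl (JG E') (JP P)].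

Definition causally_minimal (V : finType) (P : ci_relation V)
    (E : {set V * V}) : Prop :=
  markovian P E /\
  forall E' : {set V * V}, is_dag E' -> E' \proper E -> ~ markovian P E'.

(* Main.v *)
Require Import Defs.
From mathcomp Require Import all_boot.
From mathcomp Require Import zify.

Set Implicit Arguments.
Unset Strict Implicit.
Unset Printing Implicit Defensive.


Section Basics.
Variable V : finType.
Implicit Types (E : {set V * V}) (C : {set V}).

Definition cond E (cc : pred V) C (f : bool) (u n : V) : bool :=
  if f && ((n, u) \in E) then cc u else u \notin C.

Fixpoint wsa E (cc : pred V) C (f : bool) (u : V) (s : seq V) : bool :=
  match s with
  | [::] => true
  | n :: s' => [&& adjG E u n, cond E cc C f u n & wsa E cc C ((u, n) \in E) n s']
  end.

Definition cc2 E C : pred V :=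
  fun u => [exists c, (c \in C) && connect (edge_rel E) u c].

Lemma adjGC E u v : adjG E u v = adjG E v u.
Proof. by rewrite /adjG orbC. Qed.

Lemma edge_conn E u v : (u, v) \in E -> connect (edge_rel E) u v.
Proof. by move=> h; apply: connect1. Qed.

Lemma dag_noloop E u : is_dag E -> (u, u) \notin E.
Proof. by move=> hG; apply/negP => /hG; rewrite connect0. Qed.

Lemma dag_asym E u v : is_dag E -> (u, v) \in E -> (v, u) \notin E.
Proof. by move=> hG /hG h; apply/negP => /edge_conn; apply/negP. Qed.

Lemma dag_adj_neq E u v : is_dag E -> adjG E u v -> u != v.
Proof.
move=> hG; apply: contraL => /eqP ->; rewrite /adjG.
by rewrite (negbTE (dag_noloop _ hG)).
Qed.

Lemma dag_cyc E u v : is_dag E -> connect (edge_rel E) u v ->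
  connect (edge_rel E) v u -> u = v.
Proof.
move=> hG /connectP [p hp ->]; case: p hp => [//|w p] /= /andP [huw hp] hvu.
have := hG _ _ huw; rewrite (connect_trans _ hvu) //.
by apply/connectP; exists p.
Qed.

Lemma cc2_conn E C u v : connect (edge_rel E) u v -> cc2 E C v -> cc2 E C u.
Proof.
move=> huv /existsP [c /andP [hc hvc]]; apply/existsP; exists c.
by rewrite hc (connect_trans huv hvc).
Qed.

Lemma cc2_in E C u : u \in C -> cc2 E C u.
Proof. by move=> h; apply/existsP; exists u; rewrite h connect0. Qed.

Lemma condP E C b u :
  (if b then exists c, c \in C /\ connect (edge_rel E) u c else u \notin C)
  <-> (if b then cc2 E C u else u \notin C).
Proof.
case: b => //; split.
- by case=> c [h1 h2]; apply/existsP; exists c; rewrite h1.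
- by case/existsP => c /andP [h1 h2]; exists c.
Qed.

Lemma active_cons3 E C a x u n s :
  active_path E C a [:: x, u, n & s] <->
  ((if ((x, u) \in E) && ((n, u) \in E)
    then exists c, c \in C /\ connect (edge_rel E) u c else u \notin C)
   /\ active_path E C a [:: u, n & s]).
Proof.
split.
- move=> H; split; first by have := H 1 isT isT.
  move=> i Hi Hs; have := H i.+1 isT Hs.
  by case: i Hi Hs.
- case=> H1 H2 [//|[|i]] _ Hs; first by [].
  by have := H2 i.+1 isT Hs.
Qed.

Lemma active2 E C a x u : active_path E C a [:: x; u].
Proof. by move=> [|[|i]]. Qed.


Fixpoint wsc E (cc : pred V) C (f : bool) (u : V) (s : seq V) : bool :=
  match s with
  | [::] => true
  | n :: s' => cond E cc C f u n && wsc E cc C ((u, n) \in E) n s'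
  end.

Lemma wsa_split E cc C f u s :
  wsa E cc C f u s = path (adjG E) u s && wsc E cc C f u s.
Proof.
elim: s f u => //= n s IH f u; rewrite IH.
by case: (adjG E u n); case: (cond _ _ _ _ _ _); case: (path _ _ _).
Qed.

Lemma active_wsc E C a x u s :
  active_path E C a [:: x, u & s] <-> wsc E (cc2 E C) C ((x, u) \in E) u s.
Proof.
elim: s x u => [|n s IH] x u /=; first by split => // _; apply: active2.
rewrite active_cons3 IH condP /cond.
by case: ifP => _; split => [[-> ->]|/andP [-> ->]].
Qed.

Lemma dconn_wsa E C a b : a \notin C -> dconnected E C a b ->
  exists s, [/\ wsa E (cc2 E C) C false a s, last a s = b & uniq (a :: s)].
Proof.
move=> haC [p [hp hl hu ha]]; exists p; split => //.
rewrite wsa_split hp /=; case: p hp hl hu ha => //= u s _ _ _.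
by rewrite active_wsc /cond /= haC.
Qed.

Lemma wsa_dconn E C a s :
  wsa E (cc2 E C) C false a s -> uniq (a :: s) ->
  dconnected E C a (last a s).
Proof.
rewrite wsa_split => /andP [hp hw] hu; exists s; split => //.
case: s hp hw hu => [|u s] /= _; first by move=> _ _; move=> [|[|i]].
by case/andP => _ hw _; apply/active_wsc.
Qed.

Lemma active_rev E C a b l : active_path E C a l -> active_path E C b (rev l).
Proof.
move=> H i Hi Hs; rewrite size_rev in Hs.
set k := size l - i.+1.
have Hk : 0 < k by rewrite /k; lia.
have Hk2 : k.+1 < size l by rewrite /k; lia.
have := H k Hk Hk2 => /=.
have nab j : j < size l -> nth b l j = nth a l j by move=> hj; apply: set_nth_default.
rewrite !nth_rev ?size_rev; try lia.
rewrite !nab; try lia.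
have -> : size l - i.-1.+1 = k.+1 by rewrite /k; lia.
have -> : size l - i.+2 = k.-1 by rewrite /k; lia.
by rewrite andbC.
Qed.

Lemma dconn_sym E C a b : dconnected E C a b -> dconnected E C b a.
Proof.
case=> p [hp hl hu ha].
have hr : b :: rev (belast a p) = rev (a :: p).
  by rewrite [a :: p]lastI rev_rcons hl.
exists (rev (belast a p)); split.
- rewrite -hl rev_path; apply: sub_path hp => x y; by rewrite adjGC.
- have : last b (b :: rev (belast a p)) = a by rewrite hr rev_cons last_rcons.
  by [].
- by rewrite hr rev_uniq.
- by rewrite hr; exact: (active_rev b ha).
Qed.

Definition pa E u : {set V} := [set z | (z, u) \in E].

Lemma K_inv E u (hG : is_dag E) : forall s w,
  connect (edge_rel E) u w -> wsa E (cc2 E (pa E u)) (pa E u) true w s ->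
  connect (edge_rel E) u (last w s).
Proof.
elim=> [|m s IH] w huw //=; case/and3P => hadj hc hw.
move: hc; rewrite /cond /=; case: ifP => hmw.
- case/existsP => c /andP [hc hwc]; rewrite inE in hc.
  by have := hG _ _ hc; rewrite (connect_trans huw hwc).
- move=> _; have hwm : (w, m) \in E by move: hadj; rewrite /adjG hmw orbF.
  rewrite hwm in hw; apply: IH hw; exact: connect_trans huw (edge_conn hwm).
Qed.

Lemma dsep1 E C u v : dsep E [set u] [set v] C <-> ~ dconnected E C u v.
Proof.
split; first by move=> h; apply: h; rewrite inE.
by move=> h a b /set1P -> /set1P ->.
Qed.

Lemma K_from E (hG : is_dag E) u v : ~~ adjG E u v ->
  ~~ connect (edge_rel E) u v -> ~ dconnected E (pa E u) u v.
Proof.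
move=> hna hnc hd.
have huC : u \notin pa E u by rewrite inE dag_noloop.
have [s [hw hl _]] := dconn_wsa huC hd.
case: s hw hl => [|n s] /=; first by move=> _ hl; rewrite -hl connect0 in hnc.
case/and3P => hun _ hw hl.
case hE: ((u, n) \in E); rewrite hE in hw.
- by have := K_inv hG (edge_conn hE) hw; rewrite hl (negbTE hnc).
- have hnu : (n, u) \in E by move: hun; rewrite /adjG hE.
  case: s hw hl => [|m s] /=.
  + by move=> _ hl; rewrite -hl hun in hna.
  + by case/and3P => _; rewrite /cond /= inE hnu.
Qed.

Lemma K_from' E (hG : is_dag E) u v : ~~ adjG E u v ->
  ~~ connect (edge_rel E) v u -> ~ dconnected E (pa E v) u v.
Proof.
move=> hna hnc /dconn_sym; apply: K_from => //; by rewrite adjGC.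
Qed.

Lemma pa_out E (hG : is_dag E) u v : ~~ adjG E u v -> pa E u \subset ~: [set u; v].
Proof.
move=> hna; apply/subsetP => z; rewrite !inE => hz.
apply/negP => /orP [] /eqP hz'; subst z.
- by rewrite (negbTE (dag_noloop _ hG)) in hz.
- by move: hna; rewrite /adjG hz orbT.
Qed.

Lemma K_sep E (hG : is_dag E) u v : u != v -> ~~ adjG E u v ->
  exists C, C \subset ~: [set u; v] /\ dsep E [set u] [set v] C.
Proof.
move=> hne hna; case: (boolP (connect (edge_rel E) u v)) => huv.
- exists (pa E v); split.
  + rewrite setUC; apply: pa_out => //; by rewrite adjGC.
  + apply/dsep1; apply: K_from' => //; apply/negP => hvu.
    by move: hne; rewrite (dag_cyc hG huv hvu) eqxx.
- by exists (pa E u); split; [apply: pa_out | apply/dsep1; apply: K_from].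
Qed.

Lemma disj3_1 u v C :
  disjoint3 [set u] [set v] C <-> [/\ u != v, u \notin C & v \notin C].
Proof.
rewrite /disjoint3 !disjoints1 inE.
by split => -[-> -> ->].
Qed.

Lemma out_notin C u v : C \subset ~: [set u; v] -> (u \notin C) && (v \notin C).
Proof.
move=> h; apply/andP; split; apply/negP => /(subsetP h); by rewrite !inE eqxx ?orbT.
Qed.

Lemma flagE E E' u n : is_dag E -> E' \subset E -> adjG E' u n ->
  ((u, n) \in E') = ((u, n) \in E).
Proof.
move=> hG hs ha; case h: ((u, n) \in E'); first by rewrite (subsetP hs _ h).
have h2 : (n, u) \in E' by move: ha; rewrite /adjG h.
by rewrite (negbTE (dag_asym hG (subsetP hs _ h2))).
Qed.

Lemma wsa_sub E E' C f u s : is_dag E -> E' \subset E ->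
  wsa E' (cc2 E' C) C f u s -> wsa E (cc2 E C) C f u s.
Proof.
move=> hG hs; elim: s f u => //= n s IH f u /and3P [ha hc hw].
have ha' : adjG E n u by move: ha; rewrite /adjG => /orP [] /(subsetP hs) ->; rewrite ?orbT.
rewrite adjGC ha' /=; rewrite (flagE hG hs ha) in hw; rewrite (IH _ _ hw) andbT.
move: hc; rewrite /cond (flagE hG hs (_ : adjG E' n u)); last by rewrite adjGC.
case: ifP => // _ /existsP [c /andP [hc hcc]]; apply/existsP; exists c; rewrite hc /=.
apply: connect_sub hcc => x y hxy; apply: connect1; exact: (subsetP hs _ hxy).
Qed.

Lemma dconn_sub E E' C a b : is_dag E -> E' \subset E -> a \notin C ->
  dconnected E' C a b -> dconnected E C a b.
Proof.
move=> hG hs haC hd; have [s [hw <- hu]] := dconn_wsa haC hd.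
exact: wsa_dconn (wsa_sub hG hs hw) hu.
Qed.

Lemma dconn_edge E C u v : (u, v) \in E -> u != v -> dconnected E C u v.
Proof.
move=> h hne; exists [:: v]; split => //=.
- by rewrite /adjG h.
- by rewrite inE hne.
- exact: active2.
Qed.

Definition flip E (e : V * V) : V * V := if e \in E then e else (e.2, e.1).

Lemma card_adj E1 E2 : is_dag E1 -> is_dag E2 ->
  (forall u v, adjG E1 u v -> adjG E2 u v) ->
  #|E1| <= #|E2| /\ (#|E2| <= #|E1| -> forall u v, adjG E2 u v -> adjG E1 u v).
Proof.
move=> h1 h2 hadj.
have hinj : {in E1 &, injective (flip E2)}.
  move=> [u v] [u' v'] he he'; rewrite /flip.
  case: ifP => hu; case: ifP => hu' //=.
  - move=> [e1 e2]; subst u v.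
    by rewrite (negbTE (dag_asym h1 he')) in he.
  - move=> [e1 e2]; subst u' v'.
    by rewrite (negbTE (dag_asym h1 he)) in he'.
  - by case=> -> ->.
have hsub : [set flip E2 e | e in E1] \subset E2.
  apply/subsetP => e' /imsetP [[u v] he ->]; rewrite /flip.
  case: ifP => // hn /=.
  have := hadj u v; rewrite /adjG he /= => /(_ isT); by rewrite hn.
have hc := card_in_imset hinj.
split; first by rewrite -hc; exact: subset_leq_card.
move=> hle.
have heq : [set flip E2 e | e in E1] = E2.
  by apply/eqP; rewrite eqEcard hsub hc hle.
have key : forall u v, (u, v) \in E2 -> adjG E1 u v.
  move=> u v; rewrite -heq => /imsetP [[u' v'] he]; rewrite /flip.
  case: ifP => _ [-> ->]; by rewrite /adjG he ?orbT.
move=> u v /orP [] /key //; by rewrite adjGC.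
Qed.

End Basics.

Section Imps.
Variable V : finType.
Implicit Types (E : {set V * V}) (C : {set V}) (P : ci_relation V).

Lemma JG1 E u v C : u != v -> C \subset ~: [set u; v] ->
  dsep E [set u] [set v] C -> JG E [set u] [set v] C.
Proof.
move=> hne hs hd; split => //; apply/disj3_1.
by have /andP [h1 h2] := out_notin hs.
Qed.

Lemma imp12 P E : is_dag E -> minimally_markovian P E -> sparsest_markov P E.
Proof.
move=> hG [hM hAF]; split => //; split => // E' hG' hM'.
suff H : forall u v, adjG E u v -> adjG E' u v by case: (card_adj hG hG' H).
move=> u v huv; apply/negPn/negP => hn.
have [_ hsk] := (hAF u v).1 huv.
have hne := dag_adj_neq hG huv.
have [C [hCs hd]] := K_sep hG' hne hn.
apply: hsk; exists C; split => //; apply: hM'; exact: JG1.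
Qed.

Lemma imp34 P E : is_dag E -> pearl_minimal P E -> causally_minimal P E.
Proof.
move=> hG [hM hN]; split => // E' hG' hpr hM'; apply: hN; exists E'; split => //.
split.
- move=> A B C [hd hs]; split => // a b ha hb hdc.
  apply: (hs a b ha hb); apply: dconn_sub hG (proper_sub hpr) _ hdc.
  by case: hd => _ h _; rewrite (disjointFr h ha).
- move/properP: (hpr) => [_ [[u v] huvE huvE']].
  have hne : u != v by apply/negP => /eqP e; subst v; rewrite (negbTE (dag_noloop _ hG)) in huvE.
  have hna : ~~ adjG E' u v.
    rewrite /adjG (negbTE huvE') /=; apply/negP => /(subsetP (proper_sub hpr)) h.
    by rewrite (negbTE (dag_asym hG huvE)) in h.
  have [C [hCs hd]] := K_sep hG' hne hna.
  exists [set u], [set v], C; split; first exact: JG1.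
  case=> _ /dsep1; apply; exact: dconn_edge.
Qed.

End Imps.

Section Walks.
Variable V : finType.
Implicit Types (E : {set V * V}) (C : {set V}).

Definition cc1 C : pred V := fun u => u \in C.

Lemma wsa_cat E cc C f u s1 n s2 :
  wsa E cc C f u (s1 ++ n :: s2) =
  wsa E cc C f u (rcons s1 n) && wsa E cc C ((last u s1, n) \in E) n s2.
Proof.
elim: s1 f u => [|m s1 IH] f u /=; first by rewrite andbT !andbA.
by rewrite IH !andbA.
Qed.

Lemma seg E C (hG : is_dag E) u : forall t w,
  connect (edge_rel E) u w -> ~~ connect (edge_rel E) w u ->
  wsa E (cc2 E C) C true w t -> u \in w :: t -> cc2 E C u.
Proof.
elim=> [|m t IH] w huw hwu /=.
- by move=> _; rewrite inE => /eqP h; subst; rewrite connect0 in hwu.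
- case/and3P => hadj hc hw; move: hc; rewrite /cond /=; case: ifP => hmw.
  + by move=> hcc _; exact: cc2_conn huw hcc.
  + move=> _ hin.
    have hwm : (w, m) \in E by move: hadj; rewrite /adjG hmw orbF.
    rewrite hwm in hw; apply: (IH m) hw _.
    * exact: connect_trans huw (edge_conn hwm).
    * apply/negP => hmu; by rewrite (connect_trans (edge_conn hwm) hmu) in hwu.
    * move: hin; rewrite inE => /orP [/eqP e|//]; subst.
      by rewrite connect0 in hwu.
Qed.

Lemma wsa_uniq E C (hG : is_dag E) : forall s u f,
  wsa E (cc2 E C) C f u s ->
  exists s', [/\ wsa E (cc2 E C) C f u s', last u s' = last u s & uniq (u :: s')].
Proof.
elim=> [|v s IH] u f /=; first by move=> _; exists [::].
case/and3P => huv hc hw.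
have [s1 [hw1 hl1 hu1]] := IH _ _ hw.
case: (boolP (u \in v :: s1)) => hin; last first.
  by exists (v :: s1); split => //=; rewrite ?huv ?hc ?hw1 ?hin ?hu1.
have hneq := dag_adj_neq hG huv.
have hin1 : u \in s1 by move: hin; rewrite inE (negbTE hneq).
case/splitPr: hin1 hw1 hl1 hu1 => t1 t2 hw1 hl1 hu1.
exists t2; rewrite wsa_cat in hw1; case/andP: hw1 => hseg htl; split.
- case: t2 htl {hl1 hu1} => [//|w t3] /=; case/and3P => huw hc2 hw3.
  rewrite huw hw3 andbT /cond.
  case hf: (f && ((w, u) \in E)).
  + case hvu: ((v, u) \in E).
    * by move: hc hf; rewrite /cond hvu andbT; case: (f).
    * have huvE : (u, v) \in E by move: huv; rewrite /adjG hvu orbF.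
      rewrite huvE in hseg; apply: (seg hG (edge_conn huvE) _ hseg).
      - by apply/negP => h; have := hG _ _ huvE; rewrite h.
      - by rewrite inE mem_rcons inE eqxx orbT.
  + case hfv: (f && ((v, u) \in E)).
    * move: hc2; rewrite /cond.
      have hwu : ((w, u) \in E) = false by move: hf hfv; case: (f) => //= ->.
      by rewrite hwu andbF.
    * by move: hc; rewrite /cond hfv.
- by move: hl1; rewrite last_cat.
- by move: hu1; rewrite -cat_cons cat_uniq => /and3P [_ _].
Qed.

Lemma detour E C (hG : is_dag E) : forall p u f,
  path (edge_rel E) u p -> last u p \in C -> u \notin C ->
  exists d, forall s, wsa E (cc1 C) C false u s -> wsa E (cc1 C) C f u (d ++ s).
Proof.
elim=> [|z p IH] u f /=; first by move=> _ ->.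
case/andP => huz hp hl hu.
have {}huz : (u, z) \in E := huz.
have hzu : ((z, u) \in E) = false by apply/negbTE/dag_asym.
case: (boolP (z \in C)) => hz.
- exists [:: z; u] => s hs /=.
  by rewrite /adjG /cond /cc1 hzu huz andbF hu hz /=.
- have [dz hdz] := IH z true hp hl hz.
  exists (z :: dz ++ [:: u]) => s hs; rewrite /= -catA /=.
  rewrite /adjG huz /cond hzu andbF hu /=; apply: hdz => /=.
  by rewrite /adjG /cond huz orbT hzu /= hz.
Qed.

Lemma w2w1 E C (hG : is_dag E) : forall s u f,
  wsa E (cc2 E C) C f u s ->
  exists s', wsa E (cc1 C) C f u s' /\ last u s' = last u s.
Proof.
elim=> [|n s IH] u f /=; first by move=> _; exists [::].
case/and3P => hun hc hw; have [s1 [hw1 hl1]] := IH _ _ hw.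
case hcol: (f && ((n, u) \in E)).
- move: hc; rewrite /cond hcol => hcc.
  case: (boolP (u \in C)) => huC.
  + by exists (n :: s1); split => //=; rewrite hun hw1 /cond hcol /cc1 huC.
  + case/existsP: hcc => c /andP [hcC /connectP [p hp hlp]].
    rewrite hlp in hcC.
    have [d hd] := detour hG f hp hcC huC.
    exists (d ++ n :: s1); split.
    * by apply: hd => /=; rewrite hun /cond /= huC hw1.
    * by rewrite last_cat /=.
- exists (n :: s1); split => //=; rewrite hun hw1 andbT /cond hcol.
  by move: hc; rewrite /cond hcol.
Qed.

Lemma wsa_cc E (cc cc' : pred V) C f u s : (forall x, cc x -> cc' x) ->
  wsa E cc C f u s -> wsa E cc' C f u s.
Proof.
move=> hcc; elim: s f u => //= n s IH f u /and3P [h1 h2 h3].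
rewrite h1 (IH _ _ h3) andbT; move: h2; rewrite /cond; case: ifP => // _; exact: hcc.
Qed.

Lemma dconn_w1 E C (hG : is_dag E) a b : a \notin C -> dconnected E C a b ->
  exists s, wsa E (cc1 C) C false a s /\ last a s = b.
Proof.
move=> haC hd; have [s [hw <- _]] := dconn_wsa haC hd; exact: w2w1.
Qed.

Lemma w1_dconn E C (hG : is_dag E) a s : wsa E (cc1 C) C false a s ->
  dconnected E C a (last a s).
Proof.
move=> hw; have hw2 : wsa E (cc2 E C) C false a s.
  by apply: wsa_cc hw => x; exact: cc2_in.
have [s' [hw' <- hu]] := wsa_uniq hG hw2; exact: wsa_dconn hw' hu.
Qed.

End Walks.



Section Covered.
Variable V : finType.
Variables (E : {set V * V}) (x y : V) (C : {set V}).
Hypothesis hG : is_dag E.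
Hypothesis hxy : (x, y) \in E.
Hypothesis cov : forall z, ((z, y) \in E) = ((z, x) \in E) || (z == x).

Definition E1 : {set V * V} := (E :\ (x, y)) :|: [set (y, x)].
Definition xye (a b : V) := ((a == x) && (b == y)) || ((a == y) && (b == x)).

Lemma hyx : ((y, x) \in E) = false.
Proof. exact/negbTE/dag_asym. Qed.

Lemma nxy : (x == y) = false.
Proof. by apply/negbTE/(dag_adj_neq hG); rewrite /adjG hxy. Qed.

Lemma nyx : (y == x) = false.
Proof. by rewrite eq_sym nxy. Qed.

Lemma E1xy : ((x, y) \in E1) = false.
Proof. by rewrite /E1 !inE !xpair_eqE !eqxx nxy nyx. Qed.

Lemma E1yx : ((y, x) \in E1) = true.
Proof. by rewrite /E1 !inE eqxx orbT. Qed.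

Lemma E1n a b : ~~ xye a b -> ((a, b) \in E1) = ((a, b) \in E).
Proof.
rewrite /xye /E1 !inE !xpair_eqE negb_or => /andP [h1 h2].
by rewrite (negbTE h1) (negbTE h2) /= orbF.
Qed.

Lemma xye_l a b : a != x -> a != y -> xye a b = false.
Proof. by move=> /negbTE h1 /negbTE h2; rewrite /xye h1 h2. Qed.

Lemma xye_r a b : b != x -> b != y -> xye a b = false.
Proof. by move=> /negbTE h1 /negbTE h2; rewrite /xye h1 h2 !andbF. Qed.

Lemma E1l a b : a != x -> a != y -> ((a, b) \in E1) = ((a, b) \in E).
Proof. by move=> h1 h2; rewrite E1n // xye_l. Qed.

Lemma E1r a b : b != x -> b != y -> ((a, b) \in E1) = ((a, b) \in E).
Proof. by move=> h1 h2; rewrite E1n // xye_r. Qed.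

Lemma xyeC a b : xye a b = xye b a.
Proof. by rewrite /xye orbC (andbC (b == x)) (andbC (b == y)). Qed.

Lemma xyevv a : xye a a = false.
Proof. by rewrite /xye; case: (a =P x) => [->|_]; rewrite ?nxy ?nyx ?andbF. Qed.

Lemma adjE1 a b : adjG E1 a b = adjG E a b.
Proof.
rewrite /adjG; case h: (xye a b).
- by case/orP: h => /andP [/eqP -> /eqP ->]; rewrite E1xy E1yx hxy hyx.
- have h' : xye b a = false by rewrite xyeC.
  by rewrite !E1n ?h ?h'.
Qed.

Lemma paneq z : (z, x) \in E -> (z != x) && (z != y).
Proof.
move=> h; apply/andP; split; apply/negP => /eqP e; subst z.
- by rewrite (negbTE (dag_noloop _ hG)) in h.
- by rewrite hyx in h.
Qed.

Lemma chneq z : (x, z) \in E -> z != x.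
Proof. by move=> h; apply/negP => /eqP e; subst z; rewrite (negbTE (dag_noloop _ hG)) in h. Qed.


Lemma wsa_flag cc u s : u \notin C -> wsa E cc C true u s -> wsa E cc C false u s.
Proof. by case: s => //= n s hu /and3P [h1 h2 h3]; rewrite h1 h3 /cond /= hu. Qed.

Notation W := (wsa E (cc1 C) C).
Notation W1 := (wsa E1 (cc1 C) C).

Lemma C1 n : forall s u f, size s <= n -> W f u s ->
  (f -> ~~ xye u (head u s)) ->
  exists s1, W1 f u s1 /\ last u s1 = last u s.
Proof.
elim: n => [|n IH] s u f.
  by case: s => [|v s] //= _ _ _; exists [::].
case: s => [|v s] hsz hw hinv; first by exists [::].
move: hw => /= /and3P [huv hc hw].
case hA: (xye u v).
-
  have hf : f = false by move: hinv; case: (f) => // /(_ isT); rewrite /= hA.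
  subst f; clear hinv; move: hc; rewrite /cond /= => hc.
  case/orP: hA => /andP [/eqP eu /eqP ev]; subst u v.
  +
    rewrite hxy in hw.
    case: s hsz hw => [|q s] hsz hw.
      by exists [:: y]; split => //=; rewrite adjE1 huv /cond /= hc.
    move: hw => /= /and3P [hyq hcq hwq].
    case: (q =P x) => [eqx|/eqP nqx].
    * subst q; rewrite hyx in hwq.
      have [s1 [h1 h2]] := IH s x false ltac:(clear -hsz; simpl in hsz; lia) hwq (fun h => ltac:(done)).
      by exists s1.
    * case hqy: ((q, y) \in E).
      - have hqx : (q, x) \in E by move: hqy; rewrite cov (negbTE nqx) orbF.
        have /andP [_ nqy] := paneq hqx.
        rewrite (negbTE (dag_asym hG hqy)) in hwq.
        have [s2 [h1 h2]] := IH s q false ltac:(clear -hsz; simpl in hsz; lia) hwq (fun h => ltac:(done)).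
        exists (q :: s2); split => //=.
        rewrite adjE1 /adjG hqx orbT /cond /= hc E1r // (negbTE (dag_asym hG hqx)) h1.
        by [].
      - have {}hyq : (y, q) \in E by move: hyq; rewrite /adjG hqy orbF.
        move: hcq; rewrite /cond hqy /= => hcq; rewrite hyq in hwq.
        have nqy : q != y by apply/negP => /eqP e; subst q; rewrite (negbTE (dag_noloop _ hG)) in hyq.
        have [s2 [h1 h2]] := IH s q true ltac:(clear -hsz; simpl in hsz; lia) hwq
          (fun _ => ltac:(by rewrite xye_l)).
        exists (y :: q :: s2); split => //=.
        by rewrite !adjE1 /adjG hxy hyq /cond /= hc E1xy /= hcq E1r // hyq h1.
  +
    rewrite hyx in hw.
    case: s hsz hw => [|r s] hsz hw.
      by exists [:: x]; split => //=; rewrite adjE1 huv /cond /= hc.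
    move: hw => /= /and3P [hxr hcr hwr]; move: hcr; rewrite /cond /= => hcr.
    case: (r =P y) => [eqy|/eqP nry].
    * subst r; rewrite hxy in hwr; have hwr' := wsa_flag hc hwr.
      have [s1 [h1 h2]] := IH s y false ltac:(clear -hsz; simpl in hsz; lia) hwr' (fun h => ltac:(done)).
      by exists s1.
    * case hrx: ((r, x) \in E).
      - have /andP [nrx _] := paneq hrx.
        rewrite (negbTE (dag_asym hG hrx)) in hwr.
        have [s2 [h1 h2]] := IH s r false ltac:(clear -hsz; simpl in hsz; lia) hwr (fun h => ltac:(done)).
        exists (r :: s2); split => //=.
        have hry : (r, y) \in E by rewrite cov hrx.
        rewrite adjE1 /adjG hry orbT /cond /= hc E1r // (negbTE (dag_asym hG hry)) h1.
        by [].
      - have hxr' : (x, r) \in E by move: hxr; rewrite /adjG hrx orbF.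
        have nrx := chneq hxr'.
        rewrite hxr' in hwr.
        have [s2 [h1 h2]] := IH s r true ltac:(clear -hsz; simpl in hsz; lia) hwr
          (fun _ => ltac:(by rewrite xye_l)).
        exists (x :: r :: s2); split => //=.
        by rewrite !adjE1 /adjG hyx hxy hxr' /cond /= hc E1yx E1l // hrx hcr E1r // hxr' h1.
-
  have step : ((u, v) \in E -> ~~ xye v (head v s)) ->
      exists s1, W1 f u s1 /\ last u s1 = last v s.
    move=> hinv2.
    have [s2 [h1 h2]] := IH s v ((u, v) \in E) ltac:(clear -hsz; simpl in hsz; lia) hw hinv2.
    exists (v :: s2); split => //=.
    have e1 : ((u, v) \in E1) = ((u, v) \in E) by rewrite E1n // hA.
    have e2 : ((v, u) \in E1) = ((v, u) \in E) by rewrite E1n // xyeC hA.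
    rewrite adjE1 huv /cond e1 e2 h1 andbT; by move: hc; rewrite /cond.
  case huvE: ((u, v) \in E); last by apply: step; rewrite huvE.
  case: s hsz hw hinv step => [|w s] hsz hw hinv step; first by apply: step => _; rewrite xyevv.
  case hvw: (xye v w); last by apply: step => _ /=; rewrite hvw.
  clear step hinv; rewrite huvE in hw; move: hw => /= /and3P [hvw' hcv hw].
  case/orP: hvw => /andP [/eqP ev /eqP ew]; subst v w.
  +
    have /andP [nux nuy] := paneq huvE.
    have huy : (u, y) \in E by rewrite cov huvE.
    move: hcv; rewrite /cond /= hyx /= => hxC.
    move: hc; rewrite /cond (negbTE (dag_asym hG huvE)) andbF => huC.
    have cuy : cond E1 (cc1 C) C f u y = true.
      by rewrite /cond E1r // (negbTE (dag_asym hG huy)) andbF.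
    have cux : cond E1 (cc1 C) C f u x = true.
      by rewrite /cond E1r // (negbTE (dag_asym hG huvE)) andbF.
    rewrite hxy in hw.
    case: s hsz hw => [|q s] hsz hw.
      by exists [:: y]; split => //=; rewrite adjE1 /adjG huy cuy.
    move: hw => /= /and3P [hyq hcq hwq].
    case: (q =P x) => [eqx|/eqP nqx].
    * subst q; rewrite hyx in hwq; move: hcq; rewrite /cond hxy /= => hyC.
      case: s hsz hwq => [|r s] hsz hwq.
        by exists [:: x]; split => //=; rewrite adjE1 /adjG huvE cux.
      move: hwq => /= /and3P [hxr _ hwr].
      case: (r =P y) => [eqy|/eqP nry].
      - subst r; rewrite hxy in hwr.
        have hw' : W f u (y :: s) by rewrite /= /adjG huy /cond (negbTE (dag_asym hG huy)) andbF huC.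
        have [s1 [h1 h2]] := IH (y :: s) u f ltac:(clear -hsz; simpl in hsz |- *; lia) hw'
          (fun _ => ltac:(by rewrite xye_l)).
        by exists s1.
      - case hrx: ((r, x) \in E).
        + have /andP [nrx _] := paneq hrx.
          have hry : (r, y) \in E by rewrite cov hrx.
          rewrite (negbTE (dag_asym hG hrx)) in hwr.
          have [s2 [h1 h2]] := IH s r false ltac:(clear -hsz; simpl in hsz; lia) hwr (fun h => ltac:(done)).
          exists (y :: r :: s2); split => //=.
          rewrite !adjE1 /adjG huy hry orbT cuy /cond E1l // huy E1l // hry /= hyC.
          by rewrite E1r // (negbTE (dag_asym hG hry)) h1.
        + have hxr' : (x, r) \in E by move: hxr; rewrite /adjG hrx orbF.
          have nrx := chneq hxr'.
          rewrite hxr' in hwr.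
          have [s2 [h1 h2]] := IH s r true ltac:(clear -hsz; simpl in hsz; lia) hwr
            (fun _ => ltac:(by rewrite xye_l)).
          exists (x :: r :: s2); split => //=.
          rewrite !adjE1 /adjG huvE hxr' cux /cond E1l // huvE E1l // hrx /= hxC.
          by rewrite E1r // hxr' h1.
    * case hqy: ((q, y) \in E).
      - have hqx : (q, x) \in E by move: hqy; rewrite cov (negbTE nqx) orbF.
        have /andP [_ nqy] := paneq hqx.
        move: hcq; rewrite /cond hqy /= => hyC.
        rewrite (negbTE (dag_asym hG hqy)) in hwq.
        have [s2 [h1 h2]] := IH s q false ltac:(clear -hsz; simpl in hsz; lia) hwq (fun h => ltac:(done)).
        exists (y :: q :: s2); split => //=.
        rewrite !adjE1 /adjG huy hqy orbT cuy /cond E1l // huy E1l // hqy /= hyC.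
        by rewrite E1r // (negbTE (dag_asym hG hqy)) h1.
      - have hyq' : (y, q) \in E by move: hyq; rewrite /adjG hqy orbF.
        move: hcq; rewrite /cond hqy andbF => hyC; rewrite hyq' in hwq.
        have nqy : q != y by apply/negP => /eqP e; subst q; rewrite (negbTE (dag_noloop _ hG)) in hyq'.
        have [s2 [h1 h2]] := IH s q true ltac:(clear -hsz; simpl in hsz; lia) hwq
          (fun _ => ltac:(by rewrite xye_l)).
        exists (y :: q :: s2); split => //=.
        rewrite !adjE1 /adjG huy hyq' cuy /cond E1l // huy E1l // hqy /= hyC.
        by rewrite E1r // hyq' h1.
  +
    have nux : u != x.
      by apply/negP => /eqP e; subst u; move: hA; rewrite /xye !eqxx /=.
    have huy := huvE.
    have huvx : (u, x) \in E by move: huy; rewrite cov (negbTE nux) orbF.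
    have /andP [_ nuy] := paneq huvx.
    move: hcv; rewrite /cond /= hxy /= => hyC.
    move: hc; rewrite /cond (negbTE (dag_asym hG huy)) andbF => huC.
    have cuy : cond E1 (cc1 C) C f u y = true.
      by rewrite /cond E1r // (negbTE (dag_asym hG huy)) andbF.
    have cux : cond E1 (cc1 C) C f u x = true.
      by rewrite /cond E1r // (negbTE (dag_asym hG huvx)) andbF.
    rewrite hyx in hw.
    case: s hsz hw => [|r s] hsz hw.
      by exists [:: x]; split => //=; rewrite adjE1 /adjG huvx cux.
    move: hw => /= /and3P [hxr hcr hwr]; move: hcr; rewrite /cond /= => hxC.
    case: (r =P y) => [eqy|/eqP nry].
    * subst r; rewrite hxy in hwr.
      have hw' : W f u (y :: s) by rewrite /= /adjG huy /cond (negbTE (dag_asym hG huy)) andbF huC.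
      have [s1 [h1 h2]] := IH (y :: s) u f ltac:(clear -hsz; simpl in hsz |- *; lia) hw'
        (fun _ => ltac:(by rewrite xye_l)).
      by exists s1.
    * case hrx: ((r, x) \in E).
      - have /andP [nrx _] := paneq hrx.
        have hry : (r, y) \in E by rewrite cov hrx.
        rewrite (negbTE (dag_asym hG hrx)) in hwr.
        have [s2 [h1 h2]] := IH s r false ltac:(clear -hsz; simpl in hsz; lia) hwr (fun h => ltac:(done)).
        exists (y :: r :: s2); split => //=.
        rewrite !adjE1 /adjG huy hry orbT cuy /cond E1l // huy E1l // hry /= hyC.
        by rewrite E1r // (negbTE (dag_asym hG hry)) h1.
      - have hxr' : (x, r) \in E by move: hxr; rewrite /adjG hrx orbF.
        have nrx := chneq hxr'.
        rewrite hxr' in hwr.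
        have [s2 [h1 h2]] := IH s r true ltac:(clear -hsz; simpl in hsz; lia) hwr
          (fun _ => ltac:(by rewrite xye_l)).
        exists (x :: r :: s2); split => //=.
        rewrite !adjE1 /adjG huvx hxr' cux /cond E1l // huvx E1l // hrx /= hxC.
        by rewrite E1r // hxr' h1.
Qed.

End Covered.



Section VP.
Variable V : finType.
Implicit Types (E : {set V * V}) (C : {set V}).

Definition vs E (a c b : V) :=
  [&& (a, c) \in E, (b, c) \in E, a != b & ~~ adjG E a b].

Definition eqv E E' :=
  (forall u v, adjG E u v = adjG E' u v) /\ (forall a c b, vs E a c b = vs E' a c b).

Lemma ex_min (P : pred V) (F : V -> nat) : (exists v, P v) ->
  exists2 v, P v & forall w, P w -> F v <= F w.
Proof. by case=> v0 hv0; case: (arg_minnP F hv0) => v hv hmin; exists v. Qed.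

Lemma ex_max (P : pred V) (F : V -> nat) : (exists v, P v) ->
  exists2 v, P v & forall w, P w -> F w <= F v.
Proof. by case=> v0 hv0; case: (arg_maxnP F hv0) => v hv hmax; exists v. Qed.

Lemma pot_dag E (phi : V -> nat) :
  (forall u v, (u, v) \in E -> phi u < phi v) -> is_dag E.
Proof.
move=> hphi a b hab; apply/negP => /connectP [p hp hl].
have aux : forall q w, path (edge_rel E) w q -> phi w <= phi (last w q).
  elim=> //= z q IH w /andP [hwz hq].
  exact: leq_trans (ltnW (hphi _ _ hwz)) (IH _ hq).
by have := aux _ _ hp; rewrite -hl leqNgt hphi.
Qed.

Definition rank E v := #|[set w | connect (edge_rel E) w v]|.

Lemma rank_conn E (hG : is_dag E) u v : connect (edge_rel E) u v -> u != v ->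
  rank E u < rank E v.
Proof.
move=> huv hne; apply: proper_card; apply/properP; split.
- apply/subsetP => w; rewrite !inE => hwu; exact: connect_trans hwu huv.
- exists v; rewrite !inE ?connect0 //; apply/negP => hvu.
  by move: hne; rewrite (dag_cyc hG huv hvu) eqxx.
Qed.

Lemma rank_edge E (hG : is_dag E) u v : (u, v) \in E -> rank E u < rank E v.
Proof. by move=> h; apply: (rank_conn hG (edge_conn h)); apply: (dag_adj_neq hG); rewrite /adjG h. Qed.

Section Rev.
Variables (E : {set V * V}) (x y : V).
Hypothesis hG : is_dag E.
Hypothesis hxy : (x, y) \in E.
Hypothesis cov : forall z, ((z, y) \in E) = ((z, x) \in E) || (z == x).

Lemma E1_dag : is_dag (E1 E x y).
Proof.
pose phi z := if z == y then (rank E x).*2.+1 else (rank E z).*2.+2.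
apply: (@pot_dag _ phi) => a b.
rewrite /E1 !inE !xpair_eqE => /orP [/andP [hn hab]|/andP [/eqP -> /eqP ->]]; last first.
  by rewrite /phi eqxx (negbTE (dag_adj_neq hG (_ : adjG E x y))) ?/adjG ?hxy //; lia.
have hr := rank_edge hG hab.
rewrite /phi; case: (a =P y) => [ea|na]; case: (b =P y) => [eb|nb].
- by subst; rewrite (negbTE (dag_noloop _ hG)) in hab.
- subst a; have := rank_edge hG hxy; lia.
- subst b; have hax : (a, x) \in E.
    move: hab; rewrite cov; case: (a =P x) => [ea|_]; last by rewrite orbF.
    by subst; move: hn; rewrite !eqxx.
  have := rank_edge hG hax; lia.
- lia.
Qed.

Lemma vs_E1 a c b : vs (E1 E x y) a c b = vs E a c b.
Proof.
have hyx := hyx hG hxy.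
have hE1xy := E1xy hG hxy.
have hE1yx := E1yx E x y.
rewrite /vs !(adjE1 hG hxy).
case hac: (xye x y a c).
  case/orP: hac => /andP [/eqP ea /eqP ec]; subst a c.
  - rewrite hE1xy hxy /=; apply/esym/negbTE; apply/negP => /and3P [hby hne hna].
    have hbx : (b, x) \in E by move: hby; rewrite cov eq_sym (negbTE hne) orbF.
    by move: hna; rewrite /adjG hbx orbT.
  - rewrite hE1yx hyx /=; apply/negbTE; apply/negP => /and3P [hbx hne hna].
    have hbx' : (b, x) \in E.
      rewrite -(@E1n _ E x y) //; rewrite /xye; apply/negP => /orP [] /andP [/eqP eb h2].
      + by rewrite (nxy hG hxy) in h2.
      + by subst b; rewrite eqxx in hne.
    have hby : (b, y) \in E by rewrite cov hbx'.
    by move: hna; rewrite /adjG hby orbT.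
case hbc: (xye x y b c).
  case/orP: hbc => /andP [/eqP eb /eqP ec]; subst b c.
  - rewrite hE1xy hxy /= andbF; apply/esym/negbTE; apply/negP => /and3P [hay hne hna].
    have hax : (a, x) \in E by move: hay; rewrite cov (negbTE hne) orbF.
    by move: hna; rewrite /adjG hax.
  - rewrite hE1yx hyx /= andbF; apply/negbTE; apply/negP => /and3P [hax hne hna].
    have hax' : (a, x) \in E by rewrite -(@E1n _ E x y) ?hac.
    have hay : (a, y) \in E by rewrite cov hax'.
    by move: hna; rewrite /adjG hay.
by rewrite !(@E1n _ E x y) ?hac ?hbc.
Qed.

Lemma E1_eqv : eqv (E1 E x y) E.
Proof. split => *; [exact: adjE1|exact: vs_E1]. Qed.

End Rev.

Lemma eqv_trans E1 E2 E3 : eqv E1 E2 -> eqv E2 E3 -> eqv E1 E3.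
Proof. by case=> h1 h2 [h3 h4]; split => *; rewrite ?h1 ?h2 ?h3 ?h4. Qed.

Lemma find_edge E E' : is_dag E -> is_dag E' -> eqv E E' ->
  (exists e, e \in E :\: E') ->
  exists x y, [/\ (x, y) \in E, (x, y) \notin E' &
    forall z, ((z, y) \in E) = ((z, x) \in E) || (z == x)].
Proof.
move=> hG hG' [hadj hvs] [[u0 v0] he0].
set D := E :\: E'.
have inD a b : ((a, b) \in D) = ((a, b) \in E) && ((a, b) \notin E').
  by rewrite !inE andbC.
have flipE' a b : (a, b) \in D -> (b, a) \in E'.
  rewrite inD => /andP [hab hn]; have : adjG E' a b by rewrite -hadj /adjG hab.
  by rewrite /adjG (negbTE hn).
have [Y hY minY] := @ex_min (fun v => [exists u, (u, v) \in D]) (rank E)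
  (ex_intro _ v0 (introT existsP (ex_intro _ u0 he0))).
case/existsP: hY => u1 hu1.
have [X hX maxX] := @ex_max (fun u => (u, Y) \in D) (rank E) (ex_intro _ u1 hu1).
have hXY : (X, Y) \in E by move: hX; rewrite inD => /andP [].
have hXY' : (X, Y) \notin E' by move: hX; rewrite inD => /andP [].
have hYX' : (Y, X) \in E' := flipE' _ _ hX.
exists X, Y; split => // z.
case: (z =P X) => [->|/eqP nzX]; first by rewrite hXY orbT.
rewrite orbF; apply/idP/idP => hz.
-
  have hadjzX : adjG E z X.
    apply/negPn/negP => hna.
    have : vs E z Y X by rewrite /vs hz hXY nzX hna.
    by rewrite hvs /vs (negbTE hXY') andbF.
  case/orP: hadjzX => // hXz.
  have hzY' : (z, Y) \in E'.
    apply/negPn/negP => hn.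
    have : rank E z <= rank E X by apply: maxX; rewrite inD hz hn.
    by rewrite leqNgt (rank_edge hG hXz).
  have hXz' : (X, z) \in E'.
    apply/negPn/negP => hn.
    have : rank E Y <= rank E z by apply: minY; apply/existsP; exists X; rewrite inD hXz hn.
    by rewrite leqNgt (rank_edge hG hz).
  have := hG' _ _ hYX'.
  by rewrite (connect_trans (edge_conn hXz') (edge_conn hzY')).
-
  have hzY : z != Y.
    apply/negP => /eqP e; subst z.
    by rewrite (negbTE (dag_asym hG hXY)) in hz.
  have hadjzY : adjG E z Y.
    apply/negPn/negP => hna.
    have hadjzX' : adjG E' z X by rewrite -hadj /adjG hz.
    case/orP: hadjzX' => hzX'.
    + have : vs E' z X Y by rewrite /vs hzX' hYX' hzY -hadj hna.
      by rewrite -hvs /vs (negbTE (dag_asym hG hXY)) andbF.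
    + have hzX'' : (z, X) \in D.
        by rewrite inD hz; apply/negP => h; rewrite (negbTE (dag_asym hG' hzX')) in h.
      have : rank E Y <= rank E X by apply: minY; apply/existsP; exists z.
      by rewrite leqNgt (rank_edge hG hXY).
  case/orP: hadjzY => // hYz.
  have := hG _ _ hz.
  by rewrite (connect_trans (edge_conn hXY) (edge_conn hYz)).
Qed.

Variable C : {set V}.

Lemma eq_of_nodiff E E' : is_dag E' -> eqv E E' -> E :\: E' = set0 -> E = E'.
Proof.
move=> hG' [hadj _] h0.
have sub : forall u v, (u, v) \in E -> (u, v) \in E'.
  move=> u v h; apply/negPn/negP => hn.
  have : (u, v) \in E :\: E' by rewrite inE hn h.
  by rewrite h0 inE.
apply/setP => [[u v]]; apply/idP/idP => h; first exact: sub.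
have : adjG E u v by rewrite hadj /adjG h.
case/orP => // /sub hvu.
by rewrite (negbTE (dag_asym hG' h)) in hvu.
Qed.

Lemma VP E' (hG' : is_dag E') n : forall E, #|E :\: E'| <= n -> is_dag E ->
  eqv E E' -> forall a s, wsa E (cc1 C) C false a s ->
  exists s', wsa E' (cc1 C) C false a s' /\ last a s' = last a s.
Proof.
elim: n => [|n IH] E hsz hG heq a s hw.
  have h0 : E :\: E' = set0 by apply/eqP; rewrite -cards_eq0; lia.
  by rewrite -(eq_of_nodiff hG' heq h0); exists s.
case: (set_0Vmem (E :\: E')) => [h0|[e he]].
  by rewrite -(eq_of_nodiff hG' heq h0); exists s.
have [x [y [hxy hxy' cov]]] := find_edge hG hG' heq (ex_intro _ e he).
have [s1 [hw1 hl1]] := C1 hG hxy cov (n := size s) (leqnn _) hw (fun h => ltac:(done)).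
have hG1 := E1_dag hG hxy cov.
have heq1 : eqv (E1 E x y) E' := eqv_trans (E1_eqv hG hxy cov) heq.
have hlt : #|E1 E x y :\: E'| < #|E :\: E'|.
  apply: proper_card; apply/properP; split.
  - apply/subsetP => [[a' b']]; rewrite /E1 !inE !xpair_eqE.
    case/andP => hn /orP [/andP [_ hab]|/andP [/eqP ea /eqP eb]]; first by rewrite hn hab.
    subst a' b'; exfalso; move: hn => /negP; apply.
    have : adjG E' x y by case: heq => h _; rewrite -h /adjG hxy.
    by rewrite /adjG (negbTE hxy').
  - exists (x, y); first by rewrite inE hxy hxy'.
    by rewrite inE (E1xy hG hxy) andbF.
have [s2 [hw2 hl2]] := IH (E1 E x y) ltac:(lia) hG1 heq1 a s1 hw1.
by exists s2; rewrite hl2 hl1.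
Qed.

End VP.



Section Final.
Variable V : finType.
Implicit Types (E : {set V * V}) (C : {set V}) (P : ci_relation V).

Lemma dconn3 E C a c b : adjG E a c -> adjG E c b -> a != c -> c != b -> a != b ->
  (if ((a, c) \in E) && ((b, c) \in E)
   then exists c', c' \in C /\ connect (edge_rel E) c c' else c \notin C) ->
  dconnected E C a b.
Proof.
move=> hac hcb nac ncb nab hc; exists [:: c; b]; split => //=.
- by rewrite hac hcb.
- by rewrite !inE negb_or nac nab ncb.
- by apply/active_cons3; split => //; apply: active2.
Qed.

Lemma sep_choose E (hG : is_dag E) a b (Q : {set V} -> Prop) :
  a != b -> ~~ adjG E a b ->
  (~~ connect (edge_rel E) a b -> Q (pa E a)) ->
  (connect (edge_rel E) a b -> Q (pa E b)) ->
  exists C0, [/\ Q C0, C0 \subset ~: [set a; b] & ~ dconnected E C0 a b].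
Proof.
move=> hne hna h1 h2; case: (boolP (connect (edge_rel E) a b)) => hab.
- exists (pa E b); split; first exact: h2.
  + rewrite setUC; apply: pa_out => //; by rewrite adjGC.
  + apply: K_from' => //; apply/negP => hba.
    by move: hne; rewrite (dag_cyc hG hab hba) eqxx.
- by exists (pa E a); split; [exact: h1|apply: pa_out|apply: K_from].
Qed.

Lemma sep_choose' E (hG : is_dag E) a b (Q : {set V} -> Prop) :
  a != b -> ~~ adjG E a b ->
  (~~ connect (edge_rel E) b a -> Q (pa E b)) ->
  (connect (edge_rel E) b a -> Q (pa E a)) ->
  exists C0, [/\ Q C0, C0 \subset ~: [set a; b] & ~ dconnected E C0 a b].
Proof.
move=> hne hna h1 h2.
have [C0 [hq hs hd]] := @sep_choose E hG b a Q ltac:(by rewrite eq_sym) ltac:(by rewrite adjGC) h1 h2.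
exists C0; split => //; first by rewrite setUC.
by move/dconn_sym.
Qed.

Lemma vs_from E E' : is_dag E -> is_dag E' ->
  (forall u v, adjG E u v = adjG E' u v) -> incl (JG E) (JG E') ->
  forall a c b, vs E a c b = vs E' a c b.
Proof.
move=> hG hG' hadj hinc a c b.
apply/idP/idP => /and4P [hac hbc hab hna].
- have hac' : adjG E a c by rewrite /adjG hac.
  have hbc' : adjG E b c by rewrite /adjG hbc.
  have nac := dag_adj_neq hG hac'.
  have nbc := dag_adj_neq hG hbc'.
  have [C0 [hq hs hd]] := @sep_choose E hG a b (fun C0 => c \notin C0) hab hna
    (fun _ => ltac:(by rewrite /= /pa inE (negbTE (dag_asym hG hac))))
    (fun _ => ltac:(by rewrite /= /pa inE (negbTE (dag_asym hG hbc)))).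
  have hJ : JG E [set a] [set b] C0 by apply: JG1 => //; exact/dsep1.
  have [_ /dsep1 hd'] := hinc _ _ _ hJ.
  rewrite /vs hab -hadj hna !andbT.
  case h: (((a, c) \in E') && ((b, c) \in E')) => //; exfalso; apply: hd'.
  apply: (@dconn3 E' C0 a c b); [by rewrite -hadj|by rewrite -hadj adjGC|by []|by rewrite eq_sym|by []|by rewrite h].
- have hna' : ~~ adjG E a b by rewrite hadj.
  have hac' : adjG E a c by rewrite hadj /adjG hac.
  have hbc' : adjG E b c by rewrite hadj /adjG hbc.
  have nac := dag_adj_neq hG hac'.
  have nbc := dag_adj_neq hG hbc'.
  rewrite /vs hab hna' !andbT.
  apply/negPn/negP => hnot.
  have [C0 [hq hs hd]] : exists C0, [/\ c \in C0, C0 \subset ~: [set a; b] & ~ dconnected E C0 a b].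
    case hca: ((c, a) \in E).
    + apply: (@sep_choose E hG a b) => // [_|hconn]; first by rewrite /pa inE.
      rewrite /pa inE; move: hbc'; rewrite /adjG => /orP [hbcE|] //.
      have := hG _ _ hca.
      by rewrite (connect_trans hconn (edge_conn hbcE)).
    + have hacE : (a, c) \in E by move: hac'; rewrite /adjG hca orbF.
      have hcb : (c, b) \in E.
        move: hbc'; rewrite /adjG => /orP [hbcE|//].
        by move: hnot; rewrite hacE hbcE.
      apply: (@sep_choose' E hG a b) => // [_|hconn]; first by rewrite /pa inE.
      exfalso; have := hG _ _ hcb; by rewrite (connect_trans hconn (edge_conn hacE)).
  have hJ : JG E [set a] [set b] C0 by apply: JG1 => //; exact/dsep1.
  have [_ /dsep1 hd'] := hinc _ _ _ hJ.
  apply: hd'; apply: (@dconn3 E' C0 a c b); [by rewrite -hadj|by rewrite -hadj adjGC|by []|by rewrite eq_sym|by []|].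
  by rewrite hac hbc; exists c; rewrite hq connect0.
Qed.

Lemma imp23 P E : is_dag E -> sparsest_markov P E -> pearl_minimal P E.
Proof.
move=> hG [_ [hM hmin]]; split => //.
case=> E' [hG' [hinc [A [B [C [hJ' hnJ]]]]] hM'].
have hle := hmin E' hG' hM'.
have hadj1 : forall u v, adjG E' u v -> adjG E u v.
  move=> u v huv; apply/negPn/negP => hn.
  have hne := dag_adj_neq hG' huv.
  have [C0 [hCs hd]] := K_sep hG hne hn.
  have [_ /dsep1 hd'] := hinc _ _ _ (JG1 hne hCs hd); apply: hd'.
  case/orP: huv => h; first exact: dconn_edge.
  by apply: dconn_sym; apply: dconn_edge => //; rewrite eq_sym.
have [_ hback] := card_adj hG' hG hadj1.
have hadj2 := hback hle.
have hsk : forall u v, adjG E u v = adjG E' u v.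
  by move=> u v; apply/idP/idP; [exact: hadj2|exact: hadj1].
have heq : eqv E E' by split => //; exact: vs_from.
apply: hnJ; case: hJ' => hd hs; split => // a b ha hb hdc.
have haC : a \notin C by case: hd => _ h _; rewrite (disjointFr h ha).
have [s [hw hl]] := dconn_w1 hG haC hdc.
have [s' [hw' hl']] := VP hG' (n := #|E :\: E'|) (leqnn _) hG heq hw.
have := w1_dconn hG' hw'; rewrite hl' hl; exact: hs.
Qed.

End Final.

Theorem proposition1 (V : finType) (P : ci_relation V) (E : {set V * V})
    (hG : is_dag E) :
  (minimally_markovian P E -> sparsest_markov P E) /\
  (sparsest_markov P E -> pearl_minimal P E) /\
  (pearl_minimal P E -> causally_minimal P E).
Proof.
split; first exact: imp12.
by split; [exact: imp23|exact: imp34].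
Qed.
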